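(* Let $B$ be a Boolean algebra and let $U,V,W$ be CFG-spaces over $B$ with $U\cup V\subset W$ (the metrics on $U$ and $V$ being the restrictions of that of $W$), and let $F:U\to V$ be an isometry. Then there is an isometry $F':W\to W$ whose restriction to $U$ is $F$.
   Context: A Boolean metric space over a Boolean algebra $B$ is a set $X$ with a symmetric map $d:X\times X\to B$ such that $d(x,y)=0$ iff $x=y$, and $d(x,z)\le d(x,y)\vee d(y,z)$ for all $x,y,z$. A map $f:X\to Y$ between such spaces is contractive if $d(f(x),f(y))\le d(x,y)$ for all $x,y$; an isometry is a bijection with $d(f(x),f(y))=d(x,y)$ for all $x,y$. A partition of $B$ is a finite family $a_0,\dots,a_n$ of pairwise disjoint elements ($a_i\wedge a_j=0$ for $i\ne j$) with $a_0\vee\dots\vee a_n=1$. Given $x_0,\dots,x_n\in X$ and a partition $a_0,\dots,a_n$, an element $x\in X$ is a convex combination of the $x_i$ with coefficients $a_i$ if $a_i\wedge d(x,x_i)=0$ for all $i$. $X$ is convex if for every $x_0,\dots,x_n\in X$ and every partition $a_0,\dots,a_n$ of $B$ there exists such a convex combination in $X$; $X$ is finitely generated if there is a finite $S\subset X$ such that every element of $X$ is a convex combination of elements of $S$. A CFG-space is a convex, finitely generated Boolean metric space. *)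

(* Defs.v *)
(* A Boolean algebra is a complemented distributive lattice
   with top and bottom: ctbDistrLatticeType. *)
From HB Require Import structures.
From mathcomp Require Import all_boot all_order.
From Stdlib Require List.
Set Implicit Arguments. Unset Strict Implicit. Unset Printing Implicit Defensive.
Import Order.TTheory.
Local Open Scope order_scope.

Section BoolMetric.
Context {disp : Order.disp_t} {B : ctbDistrLatticeType disp}.

Definition is_bmetric (X : Type) (dist : X -> X -> B) : Prop :=
  (forall x y, dist x y = dist y x) /\
  (forall x y, dist x y = \bot <-> x = y) /\
  (forall x y z, dist x z <= dist x y `|` dist y z).

Definition is_partition (n : nat) (a : 'I_n.+1 -> B) : Prop :=
  (forall i j, i != j -> a i `&` a j = \bot) /\
  \join_(i < n.+1) a i = \top.

Definition is_convex_comb (X : Type) (dist : X -> X -> B) (n : nat)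
  (xs : 'I_n.+1 -> X) (a : 'I_n.+1 -> B) (x : X) : Prop :=
  forall i, a i `&` dist x (xs i) = \bot.

Definition is_convex (X : Type) (dist : X -> X -> B) : Prop :=
  forall (n : nat) (xs : 'I_n.+1 -> X) (a : 'I_n.+1 -> B),
    is_partition a -> exists x, is_convex_comb dist xs a x.

Definition is_fin_gen (X : Type) (dist : X -> X -> B) : Prop :=
  exists S : list X, forall x : X,
    exists (n : nat) (xs : 'I_n.+1 -> X) (a : 'I_n.+1 -> B),
      is_partition a /\ (forall i, List.In (xs i) S) /\
      is_convex_comb dist xs a x.

Definition is_CFG (X : Type) (dist : X -> X -> B) : Prop :=
  is_bmetric dist /\ is_convex dist /\ is_fin_gen dist.

Definition restr_dist (W : Type) (dist : W -> W -> B) (U : W -> Prop)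
  : {x | U x} -> {x | U x} -> B :=
  fun x y => dist (proj1_sig x) (proj1_sig y).

Definition is_isometry (X Y : Type) (dX : X -> X -> B) (dY : Y -> Y -> B)
  (f : X -> Y) : Prop :=
  bijective f /\ forall x y, dY (f x) (f y) = dX x y.

End BoolMetric.

(* Main.v *)
Require Import Defs.
From HB Require Import structures.
From mathcomp Require Import all_boot all_order.
From Stdlib Require Import Classical ClassicalEpsilon.
Set Implicit Arguments. Unset Strict Implicit. Unset Printing Implicit Defensive.
Import Order.Theory.
Local Open Scope order_scope.

Ltac lt := match goal with
 | |- is_true (?x <= ?x) => exact: lexx
 | |- is_true (_ <= _ `&` _) => rewrite lexI; apply/andP; split; lt
 | |- is_true (_ `&` _ <= _) => first [apply: leIxl; lt | apply: leIxr; lt]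
 end.

Section Swap.
Variables (T : finType) (E : rel T).
Hypotheses (hr : reflexive E) (hs : symmetric E) (ht : transitive E).

Lemma Et u v w : E u v -> E v w -> E u w.
Proof. by move=> h1 h2; apply: ht h1 h2. Qed.
Lemma Es u v : E u v -> E v u.
Proof. by rewrite hs. Qed.
Lemma Er u : E u u. Proof. exact: hr. Qed.

Ltac clos := first
  [ solve [eauto 3 using Et, Es, Er]
  | match goal with H : E ?u ?v = false |- _ =>
      exfalso; have : E u v; [solve [eauto 3 using Et, Es, Er] | by rewrite H] end ].

Lemma swap_iso a b : E a b = false ->
  let s x := if E x a then b else if E x b then a else x in
  forall x y, E (s x) (s y) = E x y.
Proof.
move=> hab s x y; rewrite /s.
case hxa: (E x a); case hya: (E y a); case hxb: (E x b); case hyb: (E y b);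
  apply/idP/idP => H; clos.
Qed.


Lemma swap_inv a b : E a b = false ->
  let s x := if E x a then b else if E x b then a else x in
  forall x, E (s (s x)) x.
Proof.
move=> hab s x; rewrite /s.
case hxa: (E x a); case hxb: (E x b); rewrite ?hr ?(hs b a) ?hab //; try clos.
by rewrite hxa hxb.
Qed.

Lemma swap_ext (al be : nat -> T) m :
  (forall l l', (l < m)%N -> (l' < m)%N -> E (al l) (al l') = E (be l) (be l')) ->
  exists tau : T -> T, (forall i j, E (tau i) (tau j) = E i j) /\
    (forall l, (l < m)%N -> E (tau (al l)) (be l)) /\ (forall j, exists i, E (tau i) j).
Proof.
elim: m => [|m IH] h.
  by exists id; split=> //; split=> // j; exists j; apply: hr.
have [tau [ti [tc ts]]] : exists tau : T -> T, (forall i j, E (tau i) (tau j) = E i j) /\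
    (forall l, (l < m)%N -> E (tau (al l)) (be l)) /\ (forall j, exists i, E (tau i) j).
  by apply: IH => l l' hl hl'; apply: h; apply: leqW.
case hab: (E (tau (al m)) (be m)).
  exists tau; split=> //; split=> // l; rewrite ltnS leq_eqVlt => /orP [/eqP -> //|].
  exact: tc.
set a := tau (al m) in hab; set b := be m in hab.
have si := swap_iso hab; have sv := swap_inv hab; simpl in si, sv.
exists (fun x => if E (tau x) a then b else if E (tau x) b then a else tau x).
split; first by move=> i j; rewrite si ti.
split.
  move=> l; rewrite ltnS leq_eqVlt => /orP [/eqP ->|hl]; first by rewrite hr hr.
  have h1 := tc _ hl.
  have h2 : E (tau (al l)) a = false.
    apply/negbTE/negP => H; move: (H); rewrite ti h ?ltnS ?leqnn ?(ltnW hl) // => H2.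
    have : E a b by eauto 4 using Et, Es.
    by rewrite hab.
  have h3 : E (tau (al l)) b = false.
    apply/negbTE/negP => H.
    have H2 : E (be l) (be m) by eauto 3 using Et, Es.
    move: H2; rewrite -h ?ltnS ?leqnn ?(ltnW hl) // -ti => H3.
    have : E a b by eauto 4 using Et, Es.
    by rewrite hab.
  by rewrite h2 h3.
move=> j; have [i hi] := ts (if E j a then b else if E j b then a else j).
exists i; apply: Et (sv j); rewrite si; exact: hi.
Qed.

End Swap.

Section Lat.
Context {disp : Order.disp_t} {B : ctbDistrLatticeType disp}.
Implicit Types a b c : B.



Lemma cover_le (I : finType) (c : I -> B) a b :
  \join_i c i = \top -> (forall i, a `&` c i <= b) -> a <= b.
Proof.
move=> hc h; apply: le_trans (_ : \join_i (a `&` c i) <= b); last first.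
  by apply/joinsP => i _; apply: h.
rewrite -[a in X in X <= _]meetx1 -hc.
elim/big_rec2: _ => [|i y1 y2 _ IH]; first by rewrite meetx0.
by rewrite meetUr leU2.
Qed.

Lemma disjE a b : (a `&` b == \bot) = (a <= ~` b).
Proof.
apply/eqP/idP => [h|h].
  by rewrite -[a]meetx1 -(joinxC b) meetUr h join0x leIr.
by apply/eqP; rewrite -lex0 -(meetCx b) leI2.
Qed.

Lemma test a b c : a `&` (b `&` c) <= c `&` a.
Proof. lt. Qed.

Definition partT (T : finType) (a : T -> B) :=
  (forall i j, i != j -> a i `&` a j = \bot) /\ \join_i a i = \top.

Lemma convexT (X : Type) (d : X -> X -> B) (hc : is_convex d)
  (T : finType) (t0 : T) (a : T -> B) (ha : partT a) (xs : T -> X) :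
  exists x, forall t, a t `&` d x (xs t) = \bot.
Proof.
have hn : #|T| = (#|T|.-1).+1 by rewrite prednK //; apply/card_gt0P; exists t0.
set n := #|T|.-1 in hn.
pose f (i : 'I_n.+1) : T := enum_val (cast_ord (esym hn) i).
have hf t : f (cast_ord hn (enum_rank t)) = t by rewrite /f cast_ordK enum_rankK.
have [|x hx] := hc n (fun i => xs (f i)) (fun i => a (f i)).
  split.
    move=> i j hij; apply: ha.1; apply: contra hij => /eqP/enum_val_inj/cast_ord_inj ->.
    by [].
  apply/le_anti; rewrite lex1 /=; rewrite -ha.2.
  by apply/joinsP => t _; rewrite -{1}(hf t); apply: joins_sup.
by exists x => t; have := hx (cast_ord hn (enum_rank t)); rewrite hf.
Qed.

Lemma part_prod (T1 T2 : finType) (a : T1 -> B) (b : T2 -> B) :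
  partT a -> partT b -> partT (fun t : T1 * T2 => a t.1 `&` b t.2).
Proof.
move=> [ha1 ha2] [hb1 hb2]; split.
  move=> [i1 i2] [j1 j2] /=; rewrite xpair_eqE negb_and => /orP [h|h].
    by apply/eqP; rewrite -lex0 -(ha1 _ _ h) leI2 // leIl.
  by apply/eqP; rewrite -lex0 -(hb1 _ _ h) leI2 // leIr.
apply/le_anti; rewrite lex1 /=.
apply: (cover_le (c := a)) => // i; apply: (cover_le (c := b)) => // j.
have := @joins_sup _ _ _ (i, j) predT (fun t : T1 * T2 => a t.1 `&` b t.2) isT.
by rewrite meet1x.
Qed.


Lemma disjointify n (c : 'I_n.+1 -> B) : \join_i c i = \top ->
  exists p : 'I_n.+1 -> B, partT p /\ forall i, p i <= c i.
Proof.
move=> hc.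
pose K (i : 'I_n.+1) := \join_(j < n.+1 | (j < i)%N) c j.
have hK (i j : 'I_n.+1) : (j < i)%N -> c j <= K i by move=> h; exact: (@joins_sup _ _ _ j (fun j : 'I_n.+1 => (j < i)%N) c h).
exists (fun i => c i `&` ~` K i); split; last by move=> i; apply: leIl.
split.
  move=> i j; wlog lij : i j / (i < j)%N => [hw|] hij.
    case: (ltngtP i j) => h; first exact: hw.
      by rewrite meetC; apply: hw => //; rewrite eq_sym.
    by move: hij; rewrite -(inj_eq val_inj) /= h eqxx.
  apply/eqP; rewrite -lex0 -(meetxC (c i)); apply: leI2; first exact: leIl.
  apply: le_trans (leIr _ _) _; rewrite lexC complK; exact: hK.
apply/le_anti; rewrite lex1 /= -hc.
have H : forall m (i : 'I_n.+1), (i < m)%N -> c i <= \join_i (c i `&` ~` K i).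
  elim=> [//|m IH] i him.
  rewrite -[c i]meetx1 -(joinCx (K i)) meetUr leUx; apply/andP; split.
    exact: (@joins_sup _ _ _ i predT (fun i => c i `&` ~` K i) isT).
  apply: le_trans (leIr _ _) _; apply/joinsP => j hj; apply: IH.
  exact: leq_trans hj him.
by apply/joinsP => i _; apply: (H n.+1).
Qed.


Fixpoint atoms (L : seq B) : seq B :=
  if L is b :: L' then [seq b `&` c | c <- atoms L'] ++ [seq ~` b `&` c | c <- atoms L']
  else [:: \top].

Lemma atoms_cover L : \join_(c <- atoms L) c = \top.
Proof.
elim: L => [|b L IH] /=; first by rewrite big_seq1.
apply/le_anti; rewrite lex1 /= -{1}IH big_cat /=.
apply/joinsP_seq => c hc _.
rewrite -[c]meet1x -(joinxC b) meetUl; apply: leU2.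
  by apply: (@joins_sup_seq _ _ _ _ _ id (b `&` c)) => //; apply: map_f.
by apply: (@joins_sup_seq _ _ _ _ _ id (~` b `&` c)) => //; apply: map_f.
Qed.

Lemma atoms_dec L c b : c \in atoms L -> b \in L -> (c <= b) || (c <= ~` b).
Proof.
elim: L c => [//|b0 L IH] c /=; rewrite mem_cat in_cons.
case/orP => /mapP [c' hc' ->] /orP [/eqP ->|hb].
- by rewrite leIl.
- by case/orP: (IH _ hc' hb) => h; apply/orP; [left|right]; apply: le_trans (leIr _ _) h.
- by rewrite leIl orbT.
- by case/orP: (IH _ hc' hb) => h; apply/orP; [left|right]; apply: le_trans (leIr _ _) h.
Qed.

Lemma atoms_size L : (0 < size (atoms L))%N.
Proof. by elim: L => [|b L IH] //=; rewrite size_cat size_map addn_gt0 IH. Qed.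

Lemma atoms_part (L : seq B) : exists N (P : 'I_N.+1 -> B),
  partT P /\ forall i b, b \in L -> (P i <= b) || (P i <= ~` b).
Proof.
have hs : size (atoms L) = (size (atoms L)).-1.+1 by rewrite prednK // atoms_size.
set N := (size (atoms L)).-1 in hs.
have hc : \join_(i < N.+1) nth \bot (atoms L) i = \top.
  by rewrite -(atoms_cover L) [RHS](big_nth \bot) hs big_mkord.
have [P [hP hPl]] := disjointify hc.
exists N, P; split => // i b hb.
have := atoms_dec (mem_nth \bot (_ : (i < size (atoms L))%N)) hb.
rewrite hs ltn_ord => /(_ isT) /orP [] h; apply/orP; [left|right];
  exact: le_trans (hPl i) h.
Qed.

End Lat.

Section Metric.
Context {disp : Order.disp_t} {B : ctbDistrLatticeType disp}.
Variables (W : Type) (dist : W -> W -> B) (hm : is_bmetric dist).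
Local Notation e x y := (~` dist x y).

Lemma e_refl x : e x x = \top.
Proof. by have [_ [h _]] := hm; rewrite (proj2 (h x x) erefl) compl0. Qed.

Lemma e_sym x y : e x y = e y x.
Proof. by have [h _] := hm; rewrite h. Qed.

Lemma e_tr x y z : e x y `&` e y z <= e x z.
Proof.
have [_ [_ h]] := hm.
by rewrite lexC complI !complK; apply: h.
Qed.

Lemma e_top x y : e x y = \top -> x = y.
Proof.
move=> h; have [_ [hd _]] := hm; apply/hd.
by rewrite -[dist x y]complK h compl1.
Qed.

Lemma le_tr c x y z : c <= e x y -> c <= e y z -> c <= e x z.
Proof. by move=> h1 h2; apply: le_trans (e_tr x y z); rewrite lexI h1 h2. Qed.

Lemma le_sym c x y : c <= e x y -> c <= e y x.
Proof. by rewrite e_sym. Qed.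

Lemma dle_e a x y : a `&` dist x y = \bot -> a <= e x y.
Proof. by move=> h; rewrite -disjE h. Qed.

End Metric.

Section FG.
Context {disp : Order.disp_t} {B : ctbDistrLatticeType disp}.

Lemma In_nth_ssr (X : Type) (y : X) (S : seq X) x :
  List.In x S -> exists j, (j < size S)%N /\ nth y S j = x.
Proof.
elim: S => [//|z S IH] /= [->|h]; first by exists 0.
by have [j [hj <-]] := IH h; exists j.+1.
Qed.

Lemma fg_idx (X : Type) (d : X -> X -> B) : is_fin_gen d ->
  exists k (s : 'I_k -> X), forall x, exists n (a : 'I_n.+1 -> B) (js : 'I_n.+1 -> 'I_k),
    is_partition a /\ forall i, a i `&` d x (s (js i)) = \bot.
Proof.
move=> [S hS]; case: S hS => [|y S] hS.
  have s : 'I_0 -> X by case=> i hi.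
  exists 0, s => x; have [n [xs [a [_ [hin _]]]]] := hS x.
  by case: (hin ord0).
exists (size (y :: S)), (fun j => nth y (y :: S) j) => x.
have [n [xs [a [ha [hin hc]]]]] := hS x.
have : forall i : 'I_n.+1, exists j : 'I_(size (y :: S)), nth y (y :: S) j = xs i.
  move=> i; have [j [hj hjx]] := In_nth_ssr y (hin i).
  by exists (Ordinal hj).
case/fin_all_exists => js hjs.
exists n, a, js; split => // i; rewrite hjs; exact: hc.
Qed.
End FG.

Section Construction.
Context {disp : Order.disp_t} {B : ctbDistrLatticeType disp}.
Variables (W : Type) (dist : W -> W -> B) (hm : is_bmetric dist) (hcv : is_convex dist).
Local Notation e x y := (~` dist x y).
Variables (k : nat) (s : 'I_k -> W) (j0 : 'I_k).
Hypothesis hs : forall x, exists n (a : 'I_n.+1 -> B) (js : 'I_n.+1 -> 'I_k),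
    is_partition a /\ forall i, a i `&` dist x (s (js i)) = \bot.
Variables (m : nat) (gv fv : 'I_m -> W).
Hypothesis hgf : forall l l', e (fv l) (fv l') = e (gv l) (gv l').

Lemma covW x : \join_(j < k) e x (s j) = \top.
Proof.
have [n [a [js [ha hax]]]] := hs x.
apply/le_anti; rewrite lex1 /= -ha.2; apply/joinsP => i _.
apply: le_trans (dle_e (hax i)) _.
exact: (@joins_sup _ _ _ (js i) predT (fun j => e x (s j)) isT).
Qed.

Definition Lst : seq B :=
  [seq e (s p.1) (s p.2) | p <- enum {: 'I_k * 'I_k}] ++
  [seq e (gv p.1) (s p.2) | p <- enum {: 'I_m * 'I_k}] ++
  [seq e (fv p.1) (s p.2) | p <- enum {: 'I_m * 'I_k}].

Lemma inS i j : e (s i) (s j) \in Lst.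
Proof. by rewrite mem_cat (map_f (fun p : 'I_k * 'I_k => e (s p.1) (s p.2)) (mem_enum _ (i, j))). Qed.
Lemma inG l j : e (gv l) (s j) \in Lst.
Proof. by rewrite !mem_cat (map_f (fun p : 'I_m * 'I_k => e (gv p.1) (s p.2)) (mem_enum _ (l, j))) orbT. Qed.
Lemma inF l j : e (fv l) (s j) \in Lst.
Proof. by rewrite !mem_cat (map_f (fun p : 'I_m * 'I_k => e (fv p.1) (s p.2)) (mem_enum _ (l, j))) !orbT. Qed.

Variables (N : nat) (P : 'I_N.+1 -> B) (hP : partT P).
Hypothesis hdec : forall i b, b \in Lst -> (P i <= b) || (P i <= ~` b).

Lemma dec_le v b : b \in Lst -> P v `&` b != \bot -> P v <= b.
Proof.
move=> hb; case/orP: (hdec v hb) => // h.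
by rewrite disjE h.
Qed.

Lemma C_le (c b z : B) : c <= ~` b -> c `&` b <= z.
Proof. by move=> h; apply: le_trans (_ : ~` b `&` b <= z); [apply: leI2 | rewrite meetCx le0x]. Qed.

Definition pickA v (l : 'I_m) := odflt j0 [pick j | P v <= e (gv l) (s j)].
Definition pickB v (l : 'I_m) := odflt j0 [pick j | P v <= e (fv l) (s j)].

Lemma ex_cov v x : P v != \bot -> (forall j, e x (s j) \in Lst) ->
  exists j, P v <= e x (s j).
Proof.
move=> hv hL; case: (pickP (fun j => P v <= e x (s j))) => [j hj|hn]; first by exists j.
exfalso; move/negP: hv; apply; rewrite -lex0; apply: (cover_le (covW x)) => j.
by move: (hn j); case/orP: (hdec v (hL j)) => [->//|h _]; apply: C_le.
Qed.

Lemma hA v l : P v = \bot \/ P v <= e (gv l) (s (pickA v l)).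
Proof.
case: (eqVneq (P v) \bot) => hv; [by left | right].
rewrite /pickA; case: pickP => [j -> //|hn].
have [j hj] := ex_cov hv (inG l); by rewrite hn in hj.
Qed.

Lemma hB v l : P v = \bot \/ P v <= e (fv l) (s (pickB v l)).
Proof.
case: (eqVneq (P v) \bot) => hv; [by left | right].
rewrite /pickB; case: pickP => [j -> //|hn].
have [j hj] := ex_cov hv (inF l); by rewrite hn in hj.
Qed.

Definition Erel v : rel 'I_k := fun i j => P v <= e (s i) (s j).

Lemma chain_eq (c : B) x y x' y' : c <= e x x' -> c <= e y y' ->
  (c <= e x y) = (c <= e x' y').
Proof.
move=> h1 h2; apply/idP/idP => h.
  exact (le_tr hm (le_tr hm (le_sym hm h1) h) h2).
exact (le_tr hm (le_tr hm h1 h) (le_sym hm h2)).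
Qed.

Definition al v (l : nat) := if insub l is Some l' then pickA v l' else j0.
Definition be v (l : nat) := if insub l is Some l' then pickB v l' else j0.
Lemma alE v (l : 'I_m) : al v l = pickA v l. Proof. by rewrite /al valK. Qed.
Lemma beE v (l : 'I_m) : be v l = pickB v l. Proof. by rewrite /be valK. Qed.

Lemma tau_ex v : exists tau : 'I_k -> 'I_k,
  (forall i j, Erel v (tau i) (tau j) = Erel v i j) /\
  (forall l, (l < m)%N -> Erel v (tau (al v l)) (be v l)) /\
  (forall j, exists i, Erel v (tau i) j).
Proof.
have hr : reflexive (Erel v) by move=> i; rewrite /Erel e_refl // lex1.
have hsy : symmetric (Erel v) by move=> i j; rewrite /Erel e_sym.
have ht : transitive (Erel v) by move=> j i l; rewrite /Erel => h1 h2; apply: (le_tr hm) h1 h2.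
apply: (swap_ext hr hsy ht (al := al v) (be := be v)).
move=> l l' hl hl'.
rewrite -[l]/(val (Ordinal hl)) -[l']/(val (Ordinal hl')) !alE !beE /Erel.
case: (hA v (Ordinal hl)) => [-> |h1]; first by rewrite !le0x.
case: (hA v (Ordinal hl')) => [-> |h2]; first by rewrite !le0x.
case: (hB v (Ordinal hl)) => [-> |h3]; first by rewrite !le0x.
case: (hB v (Ordinal hl')) => [-> |h4]; first by rewrite !le0x.
by rewrite -(chain_eq h1 h2) -(chain_eq h3 h4) hgf.
Qed.


Variables (tau rho : 'I_N.+1 -> 'I_k -> 'I_k).
Hypothesis ti : forall v i j, Erel v (tau v i) (tau v j) = Erel v i j.
Hypothesis tc : forall v l, (l < m)%N -> Erel v (tau v (al v l)) (be v l).
Hypothesis tr : forall v j, Erel v (tau v (rho v j)) j.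

Lemma D1 v i j : P v `&` e (s i) (s j) <= e (s (tau v i)) (s (tau v j)).
Proof.
case/orP: (hdec v (inS i j)) => h; last exact: C_le.
have : Erel v i j := h; rewrite -ti /Erel => h'; exact: le_trans (leIl _ _) h'.
Qed.

Lemma D2 v i j : P v `&` e (s (tau v i)) (s (tau v j)) <= e (s i) (s j).
Proof.
case/orP: (hdec v (inS (tau v i) (tau v j))) => h; last exact: C_le.
have : Erel v (tau v i) (tau v j) := h; rewrite ti /Erel => h'; exact: le_trans (leIl _ _) h'.
Qed.

Lemma Gc v l j : P v `&` e (gv l) (s j) <= e (fv l) (s (tau v j)).
Proof.
case/orP: (hdec v (inG l j)) => h; last exact: C_le.
case: (hA v l) => [->|hA']; first by rewrite meet0x le0x.
case: (hB v l) => [->|hB']; first by rewrite meet0x le0x.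
have hc := tc v (ltn_ord l); rewrite alE beE /Erel in hc.
have h1 : Erel v (pickA v l) j := le_tr hm (le_sym hm hA') h.
rewrite -ti /Erel in h1.
apply: le_trans (leIl _ _) _.
exact (le_tr hm (le_tr hm hB' (le_sym hm hc)) h1).
Qed.

Lemma Ex x : exists y, forall v j, P v `&` e x (s j) <= e y (s (tau v j)).
Proof.
have [n [a [js [ha hax]]]] := hs x.
have hq := part_prod hP ha.
have [y hy] := convexT hcv (ord0, ord0) hq (fun t => s (tau t.1 (js t.2))).
exists y => v j; apply: (cover_le (c := a)) => [|i]; first exact: ha.2.
have hyv := dle_e (hy (v, i)); simpl in hyv.
have hai := dle_e (hax i).
apply (le_tr hm (y := s (tau v (js i)))).
  by apply: le_trans hyv; lt.
apply: le_trans (D1 v (js i) j); rewrite lexI; apply/andP; split; first by lt.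
apply (le_tr hm (y := x)); last by lt.
apply (le_sym hm); apply: le_trans hai; lt.
Qed.

Definition Fp x := proj1_sig (constructive_indefinite_description _ (Ex x)).
Lemma FpS x v j : P v `&` e x (s j) <= e (Fp x) (s (tau v j)).
Proof. exact: (proj2_sig (constructive_indefinite_description _ (Ex x))). Qed.

Lemma Fp_e x y : e (Fp x) (Fp y) = e x y.
Proof.
apply/le_anti/andP; split.
  apply: (cover_le (proj2 hP)) => v; apply: (cover_le (covW x)) => j.
  apply: (cover_le (covW y)) => j'.
  apply (le_tr hm (y := s j)); first by lt.
  apply (le_tr hm (y := s j')); last by apply (le_sym hm); lt.
  apply: le_trans (D2 v j j'); rewrite lexI; apply/andP; split; first by lt.
  apply (le_tr hm (y := Fp x)).
    by apply (le_sym hm); apply: le_trans (FpS x v j); lt.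
  apply (le_tr hm (y := Fp y)); first by lt.
  by apply: le_trans (FpS y v j'); lt.
apply: (cover_le (proj2 hP)) => v; apply: (cover_le (covW x)) => j.
apply: (cover_le (covW y)) => j'.
apply (le_tr hm (y := s (tau v j))); first by apply: le_trans (FpS x v j); lt.
apply (le_tr hm (y := s (tau v j'))); last first.
  by apply (le_sym hm); apply: le_trans (FpS y v j'); lt.
apply: le_trans (D1 v j j'); rewrite lexI; apply/andP; split; first by lt.
apply (le_tr hm (y := x)); first by apply (le_sym hm); lt.
apply (le_tr hm (y := y)); by lt.
Qed.

Lemma Fp_surj y : exists x, Fp x = y.
Proof.
have [n [b [js [hb hby]]]] := hs y.
have [x hx] := convexT hcv (ord0, ord0) (part_prod hP hb) (fun t => s (rho t.1 (js t.2))).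
exists x; apply: (e_top hm); apply/le_anti; rewrite lex1 /=.
apply: (cover_le (proj2 hP)) => v; apply: (cover_le (proj2 hb)) => i.
have hxv := dle_e (hx (v, i)); simpl in hxv.
apply (le_tr hm (y := s (tau v (rho v (js i))))).
  apply: le_trans (FpS x v (rho v (js i))); rewrite lexI; apply/andP; split; first by lt.
  by apply: le_trans hxv; lt.
apply (le_tr hm (y := s (js i))).
  by apply: le_trans (tr v (js i)); lt.
by apply (le_sym hm); apply: le_trans (dle_e (hby i)); lt.
Qed.

Lemma Fp_inj : injective Fp.
Proof. by move=> x y H; apply: (e_top hm); rewrite -Fp_e H e_refl. Qed.

Lemma Fp_iso : is_isometry dist dist Fp.
Proof.
split; last by move=> x y; apply: compl_inj; apply: Fp_e.
exists (fun y => proj1_sig (constructive_indefinite_description _ (Fp_surj y))).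
  move=> x; apply: Fp_inj.
  exact: (proj2_sig (constructive_indefinite_description _ (Fp_surj (Fp x)))).
move=> y; exact: (proj2_sig (constructive_indefinite_description _ (Fp_surj y))).
Qed.

Lemma Fp_ext x y n (a : 'I_n.+1 -> B) (gs : 'I_n.+1 -> 'I_m) : partT a ->
  (forall i, a i `&` dist x (gv (gs i)) = \bot) ->
  (forall l, e (fv l) y = e (gv l) x) -> Fp x = y.
Proof.
move=> ha hax hfy; apply: (e_top hm); apply/le_anti; rewrite lex1 /=.
apply: (cover_le (proj2 hP)) => v; apply: (cover_le (covW x)) => j.
apply: (cover_le (proj2 ha)) => i.
have hai := dle_e (hax i).
apply (le_tr hm (y := s (tau v j))); first by apply: le_trans (FpS x v j); lt.
apply (le_tr hm (y := fv (gs i))).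
  apply (le_sym hm); apply: le_trans (Gc v (gs i) j).
  rewrite lexI; apply/andP; split; first by lt.
  apply (le_tr hm (y := x)); last by lt.
  by apply (le_sym hm); apply: le_trans hai; lt.
by rewrite hfy; apply (le_sym hm); apply: le_trans hai; lt.
Qed.

End Construction.

Theorem theorem2 (disp : Order.disp_t) (B : ctbDistrLatticeType disp)
  (W : Type) (dist : W -> W -> B) (U V : W -> Prop)
  (hW : is_CFG dist)
  (hU : is_CFG (@restr_dist _ _ W dist U))
  (hV : is_CFG (@restr_dist _ _ W dist V))
  (F : {x | U x} -> {x | V x})
  (hF : is_isometry (@restr_dist _ _ W dist U) (@restr_dist _ _ W dist V) F) :
  exists F' : W -> W, is_isometry dist dist F' /\
    forall u : {x | U x}, F' (proj1_sig u) = proj1_sig (F u).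
Proof.
case: (classic (inhabited W)) => [[w0]|hne]; last first.
  exists id; split; first by split; [exists id | ].
  by move=> u; exfalso; apply: hne; exact: (inhabits (proj1_sig u)).
have [hm [hcv hfg]] := hW.
have [k [s hs]] := fg_idx hfg.
have [n0 [a0 [js0 _]]] := hs w0.
have [m [g hg]] := fg_idx hU.2.2.
pose gv := fun l => proj1_sig (g l).
pose fv := fun l => proj1_sig (F (g l)).
have hgf : forall l l', ~` dist (fv l) (fv l') = ~` dist (gv l) (gv l').
  by move=> l l'; have := hF.2 (g l) (g l'); rewrite /restr_dist /fv /gv => ->.
have [N [P [hP hdec]]] := atoms_part (Lst dist s gv fv).
have [tau htau] := fin_all_exists (tau_ex hm (js0 ord0) hs hgf hdec).
have hrho : forall v, exists rv : 'I_k -> 'I_k, forall j, Erel dist s P v (tau v (rv j)) j.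
  move=> v; apply: (@fin_all_exists _ (fun _ => 'I_k) (fun j i => Erel dist s P v (tau v i) j)) => j; exact: (proj2 (proj2 (htau v)) j).
have [rho hr] := @fin_all_exists _ (fun _ => 'I_k -> 'I_k) (fun v rv => forall j, Erel dist s P v (tau v (rv j)) j) hrho.
have hti : forall v i j, Erel dist s P v (tau v i) (tau v j) = Erel dist s P v i j.
  by move=> v; exact: (proj1 (htau v)).
have htc := fun v => proj1 (proj2 (htau v)).
exists (Fp hm hcv hs hP hdec hti); split.
  exact: (Fp_iso hm hcv hs hP hdec hti hr).
move=> u; have [n [a [gs [ha hau]]]] := hg u.
apply: (Fp_ext hm hcv hs hP hdec hti htc ha hau).
by move=> l; have := hF.2 (g l) u; rewrite /restr_dist /fv /gv => ->.
Qed.
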